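(* Let $M=\{a,\bar a,b,\bar b\}^*$ be the free monoid on the four letters $a,\bar a,b,\bar b$, and let $F$ be the free group with free basis $\{a,\bar a,b,\bar b\}$. Equip $F$ with the profinite topology, and equip $M$ with the subspace topology induced by the natural embedding $M\hookrightarrow F$. Let $D_2^{'*}\subseteq M$ be the one-sided Dyck language and $D_2^*\subseteq M$ the two-sided Dyck language on the two pairs $\{a,\bar a\}$, $\{b,\bar b\}$. Then the closure of $D_2^{'*}$ in $M$ equals $D_2^*$.
   Context: The profinite topology on $F$ is the group topology in which the subgroups of finite index of $F$ form a basis of open neighborhoods of $1_F$. The one-sided (restricted) Dyck language $D_2^{'*}$ consists of the words $w\in M$ that can be reduced to the empty word by successively deleting subwords of the form $a\bar a$ or $b\bar b$ (i.e. $a,b$ are opening brackets and $\bar a,\bar b$ the corresponding closing brackets, and the word is correctly bracketed with each opening bracket preceding its closing bracket). The two-sided (unrestricted) Dyck language $D_2^*$ consists of the words $w\in M$ that can be reduced to the empty word by successively deleting subwords of the form $a\bar a$, $\bar a a$, $b\bar b$, or $\bar b b$. *)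

(* Defs.v *)
From HB Require Import structures.
From mathcomp Require Import all_boot.
From Stdlib Require Import Relation_Operators.

Set Implicit Arguments.
Unset Strict Implicit.
Unset Printing Implicit Defensive.

Inductive letter := La | Labar | Lb | Lbbar.

Definition letter_eqb (x y : letter) : bool :=
  match x, y with
  | La, La | Labar, Labar | Lb, Lb | Lbbar, Lbbar => true
  | _, _ => false
  end.
Lemma letter_eqP : Equality.axiom letter_eqb.
Proof. by case; case; constructor. Qed.
HB.instance Definition _ := hasDecEq.Build letter letter_eqP.

Definition M := seq letter.

(* Group words: a letter together with an exponent sign (true = inverse).
   An element of F is represented by any word; two words represent the same
   element of F iff they have the same free reduction. *)
Definition gletter := (letter * bool)%type.
Definition gword := seq gletter.

Definition ginvl (x : gletter) : gletter := (x.1, ~~ x.2).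

Definition gpush (x : gletter) (s : gword) : gword :=
  match s with
  | y :: s' => if y == ginvl x then s' else x :: s
  | [::] => [:: x]
  end.

Definition reduce (w : gword) : gword := foldr gpush [::] w.

Definition Feq (u v : gword) : Prop := reduce u = reduce v.

(* product in F is concatenation of representatives; inverse: *)
Definition ginv (u : gword) : gword := rev (map ginvl u).

Definition is_subgroup (H : gword -> Prop) : Prop :=
  [/\ (forall u v, Feq u v -> H u -> H v),
      H [::],
      (forall u v, H u -> H v -> H (u ++ v)) &
      (forall u, H u -> H (ginv u))].

Definition finite_index (H : gword -> Prop) : Prop :=
  exists gs : seq gword, forall x : gword, exists2 g, g \in gs & H (ginv g ++ x).

Definition embed (w : M) : gword := map (fun l => (l, false)) w.

(* In the profinite topology the cosets g H, with H a
   subgroup of finite index, form a basis of open neighbourhoods of g; so w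
   lies in the closure of X iff every such basic neighbourhood w H of w meets
   the image of X. *)
Definition in_profinite_closure (X : M -> Prop) (w : M) : Prop :=
  forall H, is_subgroup H -> finite_index H ->
    exists2 x, X x & H (ginv (embed w) ++ embed x).

Definition pair1 (x y : letter) : bool :=
  ((x == La) && (y == Labar)) || ((x == Lb) && (y == Lbbar)).
Definition pair2 (x y : letter) : bool := pair1 x y || pair1 y x.

Definition del_step (pr : letter -> letter -> bool) (u v : M) : Prop :=
  exists p q x y, [/\ pr x y, u = p ++ [:: x; y] ++ q & v = p ++ q].

Definition Dyck1 (w : M) : Prop := clos_refl_trans M (del_step pair1) w [::].
Definition Dyck2 (w : M) : Prop := clos_refl_trans M (del_step pair2) w [::].

(* Main.v *)
Require Import Defs.
From mathcomp Require Import all_boot zify.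
From Stdlib Require Import Relation_Operators Classical.

Set Implicit Arguments.
Unset Strict Implicit.
Unset Printing Implicit Defensive.

Lemma ginvlK : involutive ginvl.
Proof. by case=> l s; rewrite /ginvl /= negbK. Qed.

Lemma ginv_cat u v : ginv (u ++ v) = ginv v ++ ginv u.
Proof. by rewrite /ginv map_cat rev_cat. Qed.

Lemma ginvK : involutive ginv.
Proof. by move=> u; rewrite /ginv map_rev revK (mapK ginvlK). Qed.

Lemma ginv_cons x u : ginv (x :: u) = ginv u ++ [:: ginvl x].
Proof. by rewrite -cat1s ginv_cat. Qed.

Fixpoint irr (s : gword) : bool :=
  match s with
  | x :: ((y :: _) as s') => (y != ginvl x) && irr s'
  | _ => true
  end.

Lemma irr_behead x s : irr (x :: s) -> irr s.
Proof. by case: s => //= y s /andP[]. Qed.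

Lemma gpush_irr x s : irr s -> irr (gpush x s).
Proof.
case: s => [|y s] //= Hs.
case: ifP => [_|/negbT Hy]; first exact: irr_behead Hs.
by rewrite /= Hy.
Qed.

Lemma reduce_irr u : irr (reduce u).
Proof. by elim: u => //= x u IH; apply: gpush_irr. Qed.

Lemma gpush_cancel x s : irr s -> gpush x (gpush (ginvl x) s) = s.
Proof.
case: s => [|y s] /=; first by rewrite ?ginvlK eqxx.
rewrite ?ginvlK; case: (eqVneq y x) => [->|Hyx] Hs.
  case: s Hs => [|z s] /=; first by [].
  by case/andP=> /negbTE ->.
by rewrite /= eqxx.
Qed.

Lemma foldr_cancel s q :
  foldr gpush (reduce q) (s ++ ginv s) = reduce q.
Proof.
elim: s q => //= x s IH q.
rewrite ginv_cons catA foldr_cat /=.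
have -> : gpush (ginvl x) (reduce q) = reduce (ginvl x :: q) by [].
by rewrite IH /= gpush_cancel // reduce_irr.
Qed.

Lemma Feq_cancel p s q : Feq (p ++ s ++ ginv s ++ q) (p ++ q).
Proof.
rewrite /Feq /reduce foldr_cat [in RHS]foldr_cat catA foldr_cat.
by rewrite -/(reduce q) foldr_cancel.
Qed.

Lemma Feq_cancelV p s q : Feq (p ++ ginv s ++ s ++ q) (p ++ q).
Proof. by have := Feq_cancel p (ginv s) q; rewrite ginvK. Qed.

Lemma Feq_catl p u v : Feq u v -> Feq (p ++ u) (p ++ v).
Proof. by rewrite /Feq /reduce !foldr_cat => ->. Qed.
Section Dir2.
Variable H : gword -> Prop.
Hypothesis sH : is_subgroup H.

Lemma Hf u v : Feq v u -> H u -> H v.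
Proof. by case: sH => Hi _ _ _ /esym; apply: Hi. Qed.
Lemma H0 : H [::]. Proof. by case: sH. Qed.
Lemma Hcat u v : H u -> H v -> H (u ++ v). Proof. by case: sH => _ _ Hc _; apply: Hc. Qed.
Lemma Hinv u : H u -> H (ginv u). Proof. by case: sH => _ _ _ Hc; apply: Hc. Qed.

Definition E u v := forall g, H (ginv g ++ (ginv u ++ v) ++ g).

Lemma E_refl u : E u u.
Proof.
move=> g; apply: (Hf _ H0); rewrite -catA.
rewrite /Feq (Feq_cancelV (ginv g) u g).
by have := Feq_cancelV [::] g [::]; rewrite cats0 /= => ->.
Qed.

Lemma E_cat u v u' v' : E u v -> E u' v' -> E (u ++ u') (v ++ v').
Proof.
move=> E1 E2 g.
have := Hcat (E1 (u' ++ g)) (E2 g).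
apply: Hf; rewrite /Feq.
rewrite !ginv_cat -!catA.
have := Feq_cancel (ginv g ++ ginv u' ++ ginv u ++ v ++ u') g (ginv u' ++ v' ++ g).
rewrite -!catA /Feq => ->.
have := Feq_cancel (ginv g ++ ginv u' ++ ginv u ++ v) u' (v' ++ g).
by rewrite -!catA /Feq => ->.
Qed.
End Dir2.
Definition pow (u : gword) k := flatten (nseq k u).

Lemma pow_add u a b : pow u (a + b) = pow u a ++ pow u b.
Proof. by rewrite /pow nseqD flatten_cat. Qed.

Lemma pow_mul u a b : pow u (a * b) = pow (pow u a) b.
Proof.
elim: b => [|b IH]; first by rewrite muln0.
by rewrite mulnS pow_add IH.
Qed.

Lemma pow1 z k : pow [:: z] k = nseq k z.
Proof. by elim: k => //= k IH; rewrite -IH. Qed.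

Lemma pow_conj g Y k :
  Feq (pow (ginv g ++ Y ++ g) k.+1) (ginv g ++ pow Y k.+1 ++ g).
Proof.
elim: k => [|k IH]; first by rewrite /pow /= !cats0.
rewrite [pow _ k.+2]/pow /= -/(pow _ k.+1).
rewrite /Feq (Feq_catl (ginv g ++ Y ++ g) IH).
have := Feq_cancel (ginv g ++ Y) g (pow Y k.+1 ++ g).
by rewrite -!catA /Feq => ->.
Qed.

Lemma pigeon n (P : nat -> nat -> Prop) :
  (forall i, i <= n -> exists2 j, j < n & P i j) ->
  exists i i' j, [/\ i < i' <= n, P i j & P i' j].
Proof.
elim: n P => [|n IH] P HP.
  by have [j] := HP 0 (leqnn 0).
have [j0 Hj0 Pj0] := HP n.+1 (leqnn _).
case: (classic (exists2 i, i <= n & P i j0)) => [[i Hi Pi]|Hno].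
  by exists i, n.+1, j0; split => //; rewrite ltnS Hi leqnn.
pose P' i j := P i (if j0 <= j then j.+1 else j).
have HP' : forall i, i <= n -> exists2 j, j < n & P' i j.
  move=> i Hi; have [j Hj Pij] := HP i (leqW Hi).
  have Hne : j != j0.
    by apply/eqP=> E; apply: Hno; exists i => //; rewrite -E.
  case: (ltngtP j j0) Hne => // Hjj _.
    exists j; first by lia.
    by rewrite /P' leqNgt Hjj.
  exists j.-1; first by lia.
  rewrite /P' ifT; last by lia.
  by rewrite (ltn_predK Hjj).
have [i [i' [j [Hii Pi Pi']]]] := IH P' HP'.
exists i, i', (if j0 <= j then j.+1 else j); split => //.
by lia.
Qed.
Section Dir2b.
Variable H : gword -> Prop.
Hypothesis sH : is_subgroup H.
Variable gs : seq gword.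
Hypothesis Hgs : forall x : gword, exists2 g, g \in gs & H (ginv g ++ x).

Lemma H_pow u k : H u -> H (pow u k).
Proof.
move=> Hu; elim: k => [|k IH]; first exact: H0 sH.
have := Hcat sH Hu IH; by rewrite /pow.
Qed.

Lemma exists_period h : exists2 d, 0 < d <= size gs & H (pow h d).
Proof.
have HP : forall i, i <= size gs ->
    exists2 j, j < size gs & H (ginv (nth [::] gs j) ++ pow h i).
  move=> i _; have [c Hc Hci] := Hgs (pow h i).
  by exists (index c gs); rewrite ?index_mem ?nth_index.
have [i [i' [j [Hii Pi Pi']]]] := pigeon HP.
exists (i' - i); first by lia.
have := Hcat sH (Hinv sH Pi) Pi'.
apply: (Hf sH).
rewrite ginv_cat ginvK -catA.
rewrite /Feq (Feq_cancel (ginv (pow h i)) (nth [::] gs j) (pow h i')).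
have -> : i' = i + (i' - i) by lia.
rewrite pow_add addKn.
by have := Feq_cancelV [::] (pow h i) (pow h (i' - i)); rewrite /Feq /= => ->.
Qed.

Lemma power y g : H (ginv g ++ embed (nseq (size gs)`! y) ++ g).
Proof.
set m := (size gs)`!.
have [d Hd Hpd] := exists_period (ginv g ++ [:: (y, false)] ++ g).
have Hm : m = d * (m %/ d).
  by rewrite mulnC divnK // dvdn_fact.
have := H_pow (m %/ d) Hpd; rewrite -pow_mul -Hm.
apply: (Hf sH).
have -> : m = m.-1.+1 by rewrite prednK // fact_gt0.
rewrite /Feq (pow_conj g [:: (y, false)] m.-1).
by rewrite pow1 /embed map_nseq.
Qed.

End Dir2b.
Lemma crt_ctx pr A C u v :
  clos_refl_trans M (del_step pr) u v ->
  clos_refl_trans M (del_step pr) (A ++ u ++ C) (A ++ v ++ C).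
Proof.
elim=> [u0 v0 [p [q [x [y [Hxy -> ->]]]]]| u0 | u0 v0 w0 _ IH1 _ IH2].
- apply: rt_step; exists (A ++ p), (q ++ C), x, y; split => //.
  + by rewrite -!catA.
  + by rewrite -!catA.
- exact: rt_refl.
- exact: rt_trans IH1 IH2.
Qed.

Lemma D1_ins A B C : Dyck1 (A ++ C) -> Dyck1 B -> Dyck1 (A ++ B ++ C).
Proof.
move=> HAC HB; apply: (@rt_trans _ _ _ (A ++ [::] ++ C)); last exact: HAC.
exact: crt_ctx.
Qed.

Lemma D1_pair x y : pair1 x y -> Dyck1 [:: x; y].
Proof. by move=> H; apply: rt_step; exists [::], [::], x, y. Qed.

Lemma D1_nil : Dyck1 [::]. Proof. exact: rt_refl. Qed.

Lemma D1_nest k y x B : pair1 y x -> Dyck1 B -> Dyck1 (nseq k y ++ B ++ nseq k x).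
Proof.
move=> Hyx HB; elim: k => [|k IH]; first by rewrite /= cats0.
have -> : nseq k.+1 y ++ B ++ nseq k.+1 x = [:: y] ++ (nseq k y ++ B ++ nseq k x) ++ [:: x].
  have nS : forall (z : letter) j, nseq j.+1 z = nseq j z ++ [:: z].
    by move=> z j; rewrite -addn1 nseqD.
  by rewrite [nseq k.+1 x]nS /= -!catA.
apply: D1_ins => //; exact: D1_pair.
Qed.
Lemma nseqSr (z : letter) j : nseq j.+1 z = nseq j z ++ [:: z].
Proof. by rewrite -addn1 nseqD. Qed.

Section Dir2c.
Variable H : gword -> Prop.
Hypothesis sH : is_subgroup H.
Variable gs : seq gword.
Hypothesis Hgs : forall x : gword, exists2 g, g \in gs & H (ginv g ++ x).

Lemma embed_cat u v : embed (u ++ v) = embed u ++ embed v.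
Proof. exact: map_cat. Qed.

Lemma blocks x y : pair2 x y -> exists bx by_,
  [/\ Dyck1 (bx ++ by_), E H (embed [:: x]) (embed bx) & E H (embed [:: y]) (embed by_)].
Proof.
case/orP => Hp.
  exists [:: x], [:: y]; split; [exact: D1_pair | exact: E_refl | exact: E_refl].
set m := (size gs)`!.
have Hm : m = m.-1.+1 by rewrite prednK // fact_gt0.
exists (nseq m y ++ [:: x]), (y :: nseq m x); split.
- have [m' ->] : exists m', m = m'.+1 by exists m.-1.
  have -> : (nseq m'.+1 y ++ [:: x]) ++ y :: nseq m'.+1 x
      = nseq m' y ++ [:: y; x; y; x] ++ nseq m' x.
    by rewrite (nseqSr y m') -!catA.
  apply: D1_nest => //.
  by apply: (D1_ins (A := [::]) (B := [:: y; x]) (C := [:: y; x])); exact: D1_pair.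
- move=> g; rewrite embed_cat.
  have := power sH Hgs y ((x, false) :: g).
  by rewrite ginv_cons -!catA.
- move=> g.
  apply: (Hf sH (u := ginv g ++ embed (nseq m x) ++ g)); last exact: power.
  have := Feq_cancelV (ginv g) [:: (y, false)] (embed (nseq m x) ++ g).
  by rewrite -!catA.
Qed.

Definition Inv (w : M) := exists ws : seq (letter * M),
  [/\ map fst ws = w, Dyck1 (flatten (map snd ws)) &
      forall z, z \in ws -> E H (embed [:: z.1]) (embed z.2)].

Lemma Inv_step u v : del_step pair2 u v -> Inv v -> Inv u.
Proof.
case=> p [q [x [y [Hxy -> ->]]]] [ws [Hf1 HD HE]].
have [bx [by_ [Hb Ex Ey]]] := blocks Hxy.
set ws1 := take (size p) ws; set ws2 := drop (size p) ws.
exists (ws1 ++ (x, bx) :: (y, by_) :: ws2); split.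
- by rewrite map_cat /= /ws1 /ws2 map_take map_drop Hf1 take_size_cat // drop_size_cat.
- rewrite map_cat flatten_cat /= (catA bx).
  apply: D1_ins => //.
  by rewrite -flatten_cat -map_cat cat_take_drop.
- move=> z; rewrite mem_cat !inE => /orP[/(mem_take)|/or3P[/eqP->|/eqP->|/mem_drop]] //.
  + exact: HE.
  + exact: HE.
Qed.

Lemma Inv_D2 w : Dyck2 w -> Inv w.
Proof.
rewrite /Dyck2.
have : Inv [::] by exists [::]; split => //; exact: D1_nil.
move=> I0 Hw; move: Hw I0.
elim=> [u v Huv|u|u v w' _ IH1 _ IH2] //.
- exact: Inv_step.
- by move=> Hw'; apply: IH1; apply: IH2.
Qed.

Lemma E_list ws : (forall z, z \in ws -> E H (embed [:: z.1]) (embed z.2)) ->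
  E H (embed (map fst ws)) (embed (flatten (map snd ws))).
Proof.
elim: ws => [|z ws IH] HE; first exact: E_refl.
have -> : flatten (map snd (z :: ws)) = z.2 ++ flatten (map snd ws) by [].
have -> : map fst (z :: ws) = [:: z.1] ++ map fst ws by [].
rewrite !embed_cat.
apply: (E_cat sH); first by apply: HE; rewrite inE eqxx.
by apply: IH => z' Hz'; apply: HE; rewrite inE Hz' orbT.
Qed.

End Dir2c.

Lemma dir2 w : Dyck2 w -> in_profinite_closure Dyck1 w.
Proof.
move=> Dw H sH [gs Hgs].
have [ws [Hw HD HE]] := Inv_D2 sH Hgs Dw.
exists (flatten (map snd ws)) => //.
have := E_list sH HE [::]; by rewrite /= cats0 Hw.
Qed.
From mathcomp Require Import all_fingroup.
Local Open Scope group_scope.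

Section GProd.
Variable T : finType.
Variable P : gletter -> {perm T}.
Hypothesis HP : forall x, P (ginvl x) = (P x)^-1.

Definition gprod (u : gword) : {perm T} := foldr (fun x acc => P x * acc) 1 u.

Lemma gprod_cat u v : gprod (u ++ v) = gprod u * gprod v.
Proof. by elim: u => [|x u IH] /=; rewrite ?mul1g // IH mulgA. Qed.

Lemma gprod_ginv u : gprod (ginv u) = (gprod u)^-1.
Proof.
elim: u => [|x u IH]; first by rewrite /= invg1.
by rewrite ginv_cons gprod_cat IH /= HP mulg1 invgM.
Qed.

Lemma gprod_gpush x s : gprod (gpush x s) = P x * gprod s.
Proof.
case: s => [|y s] //=.
case: eqP => [->|_] //.
by rewrite HP mulgA mulgV mul1g.
Qed.

Lemma gprod_reduce u : gprod (reduce u) = gprod u.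
Proof. by elim: u => //= x u IH; rewrite gprod_gpush IH. Qed.
End GProd.

Section Ext.
Variable T : finType.
Variable f : T -> T.

Fixpoint ext (l : seq T) : {perm T} :=
  match l with
  | [::] => 1
  | d :: l' => ext l' * tperm (ext l' d) (f d)
  end.

Lemma ext_ok l : uniq l -> {in l &, injective f} -> forall p, p \in l -> ext l p = f p.
Proof.
elim: l => [|d l IH] //= /andP[Hd Hu] Hinj p.
rewrite inE permM; case: (eqVneq p d) => [-> _|Hpd /= Hp]; first by rewrite tpermL.
have Hinj' : {in l &, injective f}.
  by move=> a b Ha Hb; apply: Hinj; rewrite inE ?Ha ?Hb orbT.
rewrite (IH Hu Hinj' p Hp) tpermD //.
  apply/eqP => E; move: Hpd; rewrite -(IH Hu Hinj' p Hp) in E.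
  by move/perm_inj: E => ->; rewrite eqxx.
apply/eqP => E; move/Hinj: E => E.
by move: Hpd; rewrite E ?eqxx // inE ?eqxx ?Hp ?orbT.
Qed.
End Ext.
Definition phi (l : letter) : gletter :=
  match l with
  | La => (La, false) | Labar => (La, true)
  | Lb => (Lb, false) | Lbbar => (Lb, true)
  end.

Lemma crt_cons pr l u v :
  clos_refl_trans M (del_step pr) u v ->
  clos_refl_trans M (del_step pr) (l :: u) (l :: v).
Proof. by move=> H; have := crt_ctx [:: l] [::] H; rewrite !cats0. Qed.

Lemma red_D2 w : exists w',
  clos_refl_trans M (del_step pair2) w w' /\ map phi w' = reduce (map phi w).
Proof.
elim: w => [|l w [w0 [Hw Hm]]]; first by exists [::]; split => //; apply: rt_refl.
rewrite /= -Hm.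
case: w0 Hw Hm => [|l' w1] Hw Hm.
  by exists [:: l]; split => //; apply: crt_cons.
rewrite /=; case: ifP => Hc.
  exists w1; split => //.
  apply: (@rt_trans _ _ _ (l :: l' :: w1)); first exact: crt_cons.
  apply: rt_step; exists [::], w1, l, l'; split => //.
  by clear -Hc; move: Hc; case: l; case: l'.
by exists (l :: l' :: w1); split => //; apply: crt_cons.
Qed.

Lemma notD2_red w : ~ Dyck2 w -> reduce (map phi w) <> [::].
Proof.
move=> HD E; apply: HD; have [w' [Hw Hm]] := red_D2 w.
rewrite E in Hm; case: w' Hw Hm => // Hw _.
Qed.

Lemma irr_nth r i : irr r -> i.+1 < size r ->
  nth (La, false) r i.+1 != ginvl (nth (La, false) r i).
Proof.
elim: r i => [|x r IH] i //=.
case: r IH => [|y r] IH //= /andP[Hy Hr].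
case: i => [|i] /=; first by [].
by move=> Hi; apply: (IH i Hr).
Qed.
Section Construct.
Variable r : gword.
Hypothesis Hr : irr r.
Local Notation k := (size r).
Local Notation T := ('I_k.+1).
Local Notation rn i := (nth (La, false) r i).

Definition fwd (l : letter) (p : nat) : bool := (p < k) && (rn p == (l, false)).
Definition bwd (l : letter) (p : nat) : bool := (0 < p) && (rn p.-1 == (l, true)).

Definition fmap (l : letter) (p : T) : T := inord (if fwd l p then p.+1 else p.-1).

Definition dom (l : letter) : seq T := filter (fun p : T => fwd l p || bwd l p) (enum T).

Lemma fmap_val l (p : T) : (fmap l p : nat) = if fwd l p then p.+1 else p.-1.
Proof.
rewrite /fmap inordK //; case: ifP => [/andP[]//|_].
by have := ltn_ord p; lia.
Qed.

Lemma no_adj l i : i.+1 < k -> rn i = (l, false) -> rn i.+1 = (l, true) -> False.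
Proof. by move=> Hi E1 E2; have := irr_nth Hr Hi; rewrite E1 E2 eqxx. Qed.
Lemma no_adj' l i : i.+1 < k -> rn i = (l, true) -> rn i.+1 = (l, false) -> False.
Proof. by move=> Hi E1 E2; have := irr_nth Hr Hi; rewrite E1 E2 eqxx. Qed.

Lemma fmap_inj l : {in dom l &, injective (fmap l)}.
Proof.
move=> p q; rewrite !mem_filter => /andP[Hp _] /andP[Hq _] E.
have E' := f_equal (@nat_of_ord _) E; rewrite !fmap_val in E'.
have Hpk := ltn_ord p; have Hqk := ltn_ord q.
apply: val_inj => /=.
case: (boolP (fwd l p)) Hp E' => Fp Hp; case: (boolP (fwd l q)) Hq => Fq Hq E'.
- by lia.
- move: Fp Hq; rewrite /fwd /bwd /= => /andP[_ /eqP Ep] /andP[Hq0 /eqP Eq].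
  have Eq' : q.-1 = p.+1 by lia.
  rewrite Eq' in Eq; exfalso; apply: (no_adj _ Ep Eq); lia.
- move: Fq Hp; rewrite /fwd /bwd /= => /andP[_ /eqP Eq] /andP[Hp0 /eqP Ep].
  have Ep' : p.-1 = q.+1 by lia.
  rewrite Ep' in Ep; exfalso; apply: (no_adj _ Eq Ep); lia.
- move: Hp Hq; rewrite /bwd /= => /andP[Hp0 _] /andP[Hq0 _].
  by lia.
Qed.

Definition sigma (l : letter) : {perm T} := ext (fmap l) (dom l).

Lemma sigma_ok l (p : T) : fwd l p || bwd l p -> sigma l p = fmap l p.
Proof.
move=> Hp; apply: ext_ok; first exact/filter_uniq/enum_uniq.
  exact: fmap_inj.
by rewrite mem_filter Hp /=; apply: mem_enum.
Qed.

Definition P2 (x : gletter) : {perm T} := if x.2 then (sigma x.1)^-1 else sigma x.1.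

Lemma P2_inv x : P2 (ginvl x) = (P2 x)^-1.
Proof. by case: x => l [] /=; rewrite /P2 /= ?invgK. Qed.

Lemma P2_step i : i < k -> nat_of_ord (P2 (rn i) (inord i)) = i.+1.
Proof.
move=> Hi; case E: (rn i) => [l [|]]; rewrite /P2 /=.
- have Hb : bwd l (inord i.+1 : T) by rewrite /bwd inordK //= E eqxx.
  have Hf : fwd l (inord i.+1 : T) = false.
    rewrite /fwd inordK //; apply/negbTE/andP => [[Hk /eqP E2]].
    exact: (no_adj' Hk E E2).
  have Hs : sigma l (inord i.+1) = inord i.
    by rewrite sigma_ok ?Hb ?orbT // /fmap Hf inordK.
  by rewrite -Hs permK inordK.
- have Hf : fwd l (inord i : T) by rewrite /fwd inordK ?Hi ?E ?eqxx //; lia.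
  by rewrite sigma_ok ?Hf // /fmap Hf !inordK //; lia.
Qed.

Lemma gprod_take i : i <= k -> nat_of_ord (gprod P2 (take i r) ord0) = i.
Proof.
elim: i => [|i IH] Hi; first by rewrite take0 /= perm1.
rewrite (take_nth (La, false)) // -cats1 gprod_cat permM /= mulg1.
have -> : gprod P2 (take i r) ord0 = inord i.
  by apply: val_inj; rewrite /= inordK ?IH //; lia.
exact: P2_step.
Qed.

Lemma gprod_r : nat_of_ord (gprod P2 r ord0) = k.
Proof. by have := gprod_take (leqnn k); rewrite take_size. Qed.
End Construct.
Lemma reps (T : finType) (Q : T -> gword -> Prop) :
  exists gs : seq gword, forall p, (exists g, Q p g) -> exists2 g, g \in gs & Q p g.
Proof.
suff [gs Hgs] : exists gs : seq gword, forall p, p \in enum T -> (exists g, Q p g) ->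
    exists2 g, g \in gs & Q p g.
  by exists gs => p; apply: Hgs; rewrite mem_enum.
elim: (enum T) => [|d l [gs IH]]; first by exists [::].
case: (classic (exists g, Q d g)) => [[g0 Hg0]|Hno].
  exists (g0 :: gs) => p; rewrite inE => /orP[/eqP->|Hp] Hex.
    by exists g0; rewrite ?inE ?eqxx.
  by have [g Hg HQ] := IH p Hp Hex; exists g; rewrite ?inE ?Hg ?orbT.
exists gs => p; rewrite inE => /orP[/eqP->|Hp] Hex //.
exact: IH.
Qed.

Definition psi (x : gletter) : gletter := ((phi x.1).1, (phi x.1).2 (+) x.2).

Lemma psi_inv x : psi (ginvl x) = ginvl (psi x).
Proof. by case: x => l s; rewrite /psi /ginvl /= addbN. Qed.

Lemma gprod_embed r' w :
  gprod (fun x => P2 r' (psi x)) (embed w) = gprod (P2 r') (map phi w).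
Proof. by elim: w => //= l w ->; case: l. Qed.

Lemma dir1 w : in_profinite_closure Dyck1 w -> Dyck2 w.
Proof.
move=> Hcl; apply: NNPP => HD.
set r := reduce (map phi w).
have Hr : irr r by apply: reduce_irr.
have Hk : 0 < size r by move: (notD2_red HD); rewrite -/r; case: (r) => //.
pose P4 (x : gletter) := P2 r (psi x).
have HP4 : forall x, P4 (ginvl x) = (P4 x)^-1.
  by move=> x; rewrite /P4 psi_inv P2_inv.
pose H (u : gword) := gprod P4 u ord0 = ord0.
have sH : is_subgroup H.
  split.
  - move=> u v E Hu; rewrite /H -(gprod_reduce HP4) -E gprod_reduce //.
  - by rewrite /H /= perm1.
  - by move=> u v Hu Hv; rewrite /H gprod_cat permM Hu.
  - by move=> u Hu; rewrite /H gprod_ginv // -{1}Hu permK.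
have [gs Hgs] := reps (fun p g => (gprod P4 g)^-1 ord0 = p).
have fH : finite_index H.
  exists gs => x.
  have [g Hg Eg] := Hgs ((gprod P4 x)^-1 ord0) (ex_intro _ x erefl).
  by exists g => //; rewrite /H gprod_cat gprod_ginv // permM Eg permKV.
have [x Dx Hx] := Hcl H sH fH.
have triv : forall u v, clos_refl_trans M (del_step pair1) u v ->
    gprod P4 (embed u) = gprod P4 (embed v).
  move=> u v; elim=> [u0 v0 [p [q [a [b [Hab -> ->]]]]]|//|u0 v0 w0 _ -> _ -> //].
  rewrite !embed_cat !gprod_cat.
  suff Hab1 : P4 (a, false) * P4 (b, false) = 1.
    by rewrite /= mulg1 Hab1 mul1g.
  move: Hab; rewrite /pair1; case: a; case: b => //= _;
    by rewrite /P4 /psi /= /P2 /= mulgV.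
have Ex : gprod P4 (embed x) = 1 by rewrite (triv _ _ Dx).
have Ew : gprod P4 (embed w) = gprod (P2 r) r.
  rewrite /r (gprod_reduce (@P2_inv r)).
  exact: gprod_embed.
move: Hx; rewrite /H gprod_cat gprod_ginv // Ex mulg1 Ew => E.
have : gprod (P2 r) r ord0 = ord0 by rewrite -{1}E permKV.
move/(f_equal (@nat_of_ord _)); rewrite gprod_r //= => E0.
by rewrite E0 in Hk.
Qed.

Theorem theorem1 :
  forall w : M, in_profinite_closure Dyck1 w <-> Dyck2 w.
Proof. by move=> w; split; [apply: dir1 | apply: dir2]. Qed.
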